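(* Let $A$ be as in the context, suppose $A$ is normal and $cone(A)$ is simplicial, and let $\Delta$ be the coarsest triangulation of $cone(A)$, whose single maximal face is $cone(A)$ itself. Then there exists a cost vector $c\in\mathbb Z^n$ (generic) such that $\Delta=\Delta_c$ and $IP_{A,c}$ is a Gomory family.
   Context: $A\in\mathbb Z^{d\times n}$ has rank $d$, columns $a_1,\dots,a_n$, $cone(A)$ pointed, $\{x\in\mathbb R^n_{\ge0}:Ax=0\}=\{0\}$, $\mathbb ZA=\mathbb Z^d$, $\mathbb NA=\{Au:u\in\mathbb N^n\}$. $A$ is normal if $\mathbb NA=cone(A)\cap\mathbb Z^d$. For $c\in\mathbb R^n$, $\Delta_c$ is the collection of $\sigma\subseteq\{1,\dots,n\}$ (identified with cones $cone(A_\sigma)$) for which some $y\in\mathbb R^d$ has $y\cdot a_j=c_j$ ($j\in\sigma$), $y\cdot a_j<c_j$ ($j\notin\sigma$). A cost vector $c$ is generic if $\Delta_c$ is a triangulation and every program $IP_{A,c}(b)=\min\{c\cdot x: Ax=b,\ x\in\mathbb N^n\}$, $b\in\mathbb NA$, has a unique optimal solution; $IP_{A,c}$ is the family of these programs. For a maximal face $\sigma$ of $\Delta_c$ let $\tilde c_{\bar\sigma}=c_{\bar\sigma}-c_\sigma A_\sigma^{-1}A_{\bar\sigma}$; the group relaxation $G^\sigma(b)$ is $\min\{\tilde c_{\bar\sigma}\cdot x_{\bar\sigma}: A_\sigma x_\sigma+A_{\bar\sigma}x_{\bar\sigma}=b,\ x_{\bar\sigma}\ge0,\ x\in\mathbb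 Z^n\}$, which solves $IP_{A,c}(b)$ if its optimal solution is non-negative. $IP_{A,c}$ is a Gomory family if for every $b\in\mathbb NA$ some maximal face $\sigma$ of $\Delta_c$ has $G^\sigma(b)$ solving $IP_{A,c}(b)$. *)

(* Defs.v *)
From HB Require Import structures.
From mathcomp Require Import all_boot all_order all_algebra.
From mathcomp Require Import reals.
Set Implicit Arguments. Unset Strict Implicit. Unset Printing Implicit Defensive.
Import Order.TTheory GRing.Theory Num.Theory.
Local Open Scope ring_scope.

Section IPDefs.
Variables (R : realType) (d n : nat) (A : 'M[int]_(d, n)).

Definition Ar : 'M[R]_(d, n) := map_mx (fun z : int => z%:~R) A.

Definition in_cone (v : 'cV[R]_d) : Prop :=
  exists x : 'cV[R]_n, (forall j, 0 <= x j 0) /\ v = Ar *m x.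

Definition in_cone_sub (s : {set 'I_n}) (v : 'cV[R]_d) : Prop :=
  exists x : 'cV[R]_n, (forall j, 0 <= x j 0) /\ (forall j, j \notin s -> x j 0 = 0)
    /\ v = Ar *m x.

Definition indep_cols (s : {set 'I_n}) : Prop :=
  forall x : 'cV[R]_n, (forall j, j \notin s -> x j 0 = 0) -> Ar *m x = 0 -> x = 0.

Definition in_NA (b : 'cV[int]_d) : Prop :=
  exists u : 'cV[int]_n, (forall j, 0 <= u j 0) /\ b = A *m u.

Definition lattice_spanning : Prop :=
  forall b : 'cV[int]_d, exists u : 'cV[int]_n, b = A *m u.

Definition cone_pointed : Prop :=
  forall v, in_cone v -> in_cone (- v) -> v = 0.

Definition kernel_condition : Prop :=
  forall x : 'cV[R]_n, (forall j, 0 <= x j 0) -> Ar *m x = 0 -> x = 0.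

Definition normal : Prop :=
  forall b : 'cV[int]_d, in_cone (map_mx (fun z : int => z%:~R) b) -> in_NA b.

Definition simplicial : Prop :=
  exists V : 'M[R]_d, V \in unitmx /\
    forall v : 'cV[R]_d, in_cone v <->
      exists x : 'cV[R]_d, (forall i, 0 <= x i 0) /\ v = V *m x.

(* sigma is the single maximal face of the coarsest triangulation:
   cone(A_sigma) = cone(A) with A_sigma linearly independent *)
Definition coarsest_face (s : {set 'I_n}) : Prop :=
  indep_cols s /\ forall v, in_cone v <-> in_cone_sub s v.

Definition is_triangulation (D : {set 'I_n} -> Prop) : Prop :=
  [/\ forall s t : {set 'I_n}, D s -> t \subset s -> D t,
      forall s, D s -> indep_cols s,
      forall v, in_cone v <-> exists s, D s /\ in_cone_sub s v &
      forall s t : {set 'I_n}, D s -> D t -> forall v,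
        (in_cone_sub s v /\ in_cone_sub t v) <-> in_cone_sub (s :&: t) v].

Definition ya (y : 'rV[R]_d) (j : 'I_n) : R := (y *m Ar) 0 j.

Definition cr (c : 'rV[int]_n) (j : 'I_n) : R := (c 0 j)%:~R.

Definition Delta_c (c : 'rV[int]_n) (s : {set 'I_n}) : Prop :=
  exists y : 'rV[R]_d, forall j,
    (j \in s -> ya y j = cr c j) /\ (j \notin s -> ya y j < cr c j).

Definition maximal_face (c : 'rV[int]_n) (s : {set 'I_n}) : Prop :=
  Delta_c c s /\ forall t : {set 'I_n}, Delta_c c t -> s \subset t -> t = s.

Definition IP_feasible (b : 'cV[int]_d) (u : 'cV[int]_n) : Prop :=
  (forall j, 0 <= u j 0) /\ A *m u = b.

Definition cost (c : 'rV[int]_n) (u : 'cV[int]_n) : int := (c *m u) 0 0.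

Definition IP_optimal (c : 'rV[int]_n) (b : 'cV[int]_d) (u : 'cV[int]_n) : Prop :=
  IP_feasible b u /\ forall v, IP_feasible b v -> cost c u <= cost c v.

Definition generic (c : 'rV[int]_n) : Prop :=
  is_triangulation (Delta_c c) /\
  forall b, in_NA b -> exists u, IP_optimal c b u /\ forall v, IP_optimal c b v -> v = u.

(* group relaxation G^sigma(b): x in Z^n, A x = b, x_j >= 0 for j notin sigma,
   minimizing ctilde . x_sigmabar, where ctilde_j = c_j - (c_sigma A_sigma^{-1}) a_j
   and y = c_sigma A_sigma^{-1} is the (unique, A_sigma invertible) row vector
   with y . a_j = c_j for j in sigma. *)
Definition G_feasible (s : {set 'I_n}) (b : 'cV[int]_d) (x : 'cV[int]_n) : Prop :=
  A *m x = b /\ forall j, j \notin s -> 0 <= x j 0.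

Definition G_obj (c : 'rV[int]_n) (y : 'rV[R]_d) (s : {set 'I_n}) (x : 'cV[int]_n) : R :=
  \sum_(j | j \notin s) (cr c j - ya y j) * (x j 0)%:~R.

(* G^sigma(b) solves IP_{A,c}(b): its optimal solution is non-negative *)
Definition G_solves (c : 'rV[int]_n) (s : {set 'I_n}) (b : 'cV[int]_d) : Prop :=
  exists y : 'rV[R]_d, (forall j, j \in s -> ya y j = cr c j) /\
  exists x, G_feasible s b x /\
    (forall x', G_feasible s b x' -> G_obj c y s x <= G_obj c y s x') /\
    (forall j, 0 <= x j 0).

Definition gomory_family (c : 'rV[int]_n) : Prop :=
  forall b, in_NA b -> exists s, maximal_face c s /\ G_solves c s b.

End IPDefs.

(* Main.v *)
Require Import Defs.
From HB Require Import structures.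
From mathcomp Require Import all_boot all_order all_algebra.
From mathcomp Require Import reals.
From mathcomp Require Import ring lra zify.
From Stdlib Require Import Classical.
Import Order.TTheory GRing.Theory Num.Theory.
Local Open Scope ring_scope.

Lemma min_ex (Q : nat -> Prop) : (exists k, Q k) -> exists k, Q k /\ forall m, Q m -> (k <= m)%N.
Proof.
case=> k; elim: k {-2}k (leqnn k) => [|N IH] k hk Qk.
  by exists k; split => // m _; move: hk; rewrite leqn0 => /eqP ->.
case: (classic (exists m, Q m /\ (m < k)%N)) => [[m [Qm lt]]|no].
  by apply: (IH m) => //; lia.
exists k; split => // m Qm; rewrite leqNgt; apply/negP => lt; apply: no; by exists m.
Qed.

Lemma digits_lt (B m : nat) (w : 'I_m -> nat) :
  (forall j, (w j < B)%N) -> (\sum_(j < m) w j * B ^ j < B ^ m)%N.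
Proof.
elim: m w => [|m IH] w hw; first by rewrite big_ord0 expn0.
rewrite big_ord_recr /= expnS.
have := IH (fun j => w (widen_ord (leqnSn m) j)) (fun j => hw _).
have := hw ord_max.
set s := (\sum_(i < m) _)%N; set X := (B ^ m)%N; set a := w ord_max.
move=> h1 h2; nia.
Qed.

Lemma digits_inj (B m : nat) (w w' : 'I_m -> nat) :
  (forall j, (w j < B)%N) -> (forall j, (w' j < B)%N) ->
  (\sum_(j < m) w j * B ^ j = \sum_(j < m) w' j * B ^ j)%N -> forall j, w j = w' j.
Proof.
elim: m w w' => [|m IH] w w' hw hw'; first by move=> _ [].
rewrite !big_ord_recr /= => e.
have l1 := @digits_lt B m _ (fun j => hw (widen_ord (leqnSn m) j)).
have l2 := @digits_lt B m _ (fun j => hw' (widen_ord (leqnSn m) j)).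
move: e l1 l2.
set s := (\sum_(i < m) _)%N; set s' := (\sum_(i < m) _)%N; set X := (B ^ m)%N.
set a := w ord_max; set a' := w' ord_max => e l1 l2.
have eaa : a = a'.
  apply/eqP; rewrite eqn_leq; apply/andP; split; rewrite leqNgt; apply/negP => lt; nia.
have ess : s = s' by rewrite eaa in e; lia.
have IH' := IH _ _ (fun j => hw (widen_ord (leqnSn m) j)) (fun j => hw' (widen_ord (leqnSn m) j)) ess.
move=> j; case: (ltnP j m) => jm.
  by have := IH' (Ordinal jm); rewrite /widen_ord /=; have -> : Ordinal (widen_ord_proof (Ordinal jm) (leqnSn m)) = j by apply: val_inj.
have -> : j = ord_max by apply: val_inj => /=; have := ltn_ord j; lia.
exact: eaa.
Qed.

Section Main.
Variables (R : realType) (d n : nat) (A : 'M[int]_(d, n)) (sigma : {set 'I_n}).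
Hypothesis hsig : coarsest_face R A sigma.
Hypothesis hker : kernel_condition R A.
Hypothesis hnormal : normal R A.

Local Notation Ar := (Ar R A).
Local Notation ir := (fun z : int => (z%:~R : R)).
Definition suppS (x : 'cV[R]_n) := forall j, j \notin sigma -> x j 0 = 0.

Lemma mapE (f : int -> R) m p (M : 'M[int]_(m, p)) i j : map_mx f M i j = f (M i j).
Proof. by rewrite mxE. Qed.

Lemma ArM m (u : 'M[int]_(n, m)) : Ar *m map_mx ir u = map_mx ir (A *m u).
Proof. by rewrite /Ar map_mxM. Qed.

Lemma coordsP v : in_cone A v ->
  exists k, suppS k /\ (forall j, 0 <= k j 0) /\ v = Ar *m k.
Proof. by case: hsig => _ h /h [k [k0 [ks ->]]]; exists k. Qed.

Lemma coords_uniq x x' : suppS x -> suppS x' -> Ar *m x = Ar *m x' -> x = x'.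
Proof.
move=> sx sx' e; case: hsig => hi _.
apply/eqP; rewrite -subr_eq0; apply/eqP; apply: hi.
  by move=> j jn; rewrite !mxE sx // sx' // subr0.
by rewrite mulmxBr e subrr.
Qed.

Lemma row_sol (e : 'rV[R]_n) :
  exists y : 'rV[R]_d, forall i, i \in sigma -> (y *m Ar) 0 i = e 0 i.
Proof.
pose P : 'M[R]_n := diag_mx (\row_j (if j \in sigma then 1 else 0)).
have PC : P *m cokermx (Ar *m P) = 0.
  apply/matrixP => i k.
  have : P *m col k (cokermx (Ar *m P)) = 0.
    case: hsig => hi _; apply: hi.
      by move=> j jn; rewrite mul_diag_mx !mxE (negbTE jn) mul0r.
    by rewrite colE mulmxA (mulmxA (Ar *m P)) mulmx_coker mul0mx.
  move/matrixP => /(_ i 0).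
  by rewrite colE mulmxA -colE !mxE.
have : (e *m P <= Ar *m P)%MS by rewrite submxE -mulmxA PC mulmx0.
case/submxP => y ey; exists y => i iS.
have := congr1 (fun M : 'rV[R]_n => M 0 i) ey.
by rewrite mulmxA !mul_mx_diag !mxE iS !mulr1 => ->.
Qed.

Lemma ya_coords (z : 'rV[R]_d) (x : 'cV[R]_n) :
  (z *m (Ar *m x)) 0 0 = \sum_i (z *m Ar) 0 i * x i 0.
Proof. by rewrite mulmxA mxE. Qed.

Lemma col_cone j : exists k, suppS k /\ (forall i, 0 <= k i 0) /\ col j Ar = Ar *m k.
Proof.
apply: coordsP; exists (delta_mx j 0 : 'cV[R]_n); split; last by rewrite colE.
by move=> i; rewrite mxE ler0n.
Qed.

Lemma za_col (z : 'rV[R]_d) j (k : 'cV[R]_n) : col j Ar = Ar *m k -> (z *m Ar) 0 j = \sum_i (z *m Ar) 0 i * k i 0.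
Proof. by move=> e; rewrite -ya_coords -e colE mulmxA -colE [RHS]mxE. Qed.

Lemma nonpos_on_sigma (z : 'rV[R]_d) j :
  (forall i, i \in sigma -> (z *m Ar) 0 i <= 0) -> (z *m Ar) 0 j <= 0.
Proof.
move=> h; have [k [sk [k0 ek]]] := col_cone j.
rewrite (za_col z j k ek) sumr_le0 // => i _.
case: (boolP (i \in sigma)) => iS; first by rewrite mulr_le0_ge0 // h.
by rewrite sk // mulr0.
Qed.

Lemma col_nz j : col j Ar != 0.
Proof.
apply/negP => /eqP e.
have : delta_mx j 0 = 0 :> 'cV[R]_n.
  by apply: hker; [move=> i; rewrite mxE ler0n | rewrite -colE].
move/matrixP => /(_ j 0); rewrite !mxE !eqxx /= => /eqP; by rewrite oner_eq0.
Qed.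


Lemma g_exists : exists g : 'rV[int]_d, forall i, i \in sigma -> 1 <= (g *m A) 0 i.
Proof.
have [h hh] := row_sol (const_mx 1).
pose K : R := 1 + \sum_k \sum_i `|Ar k i|.
exists (\row_k Num.floor (K * h 0 k)) => i iS.
rewrite -(ler1z R).
have -> : (((\row_k Num.floor (K * h 0 k)) *m A) 0 i)%:~R
    = \sum_k ((Num.floor (K * h 0 k))%:~R * Ar k i) :> R.
  rewrite !mxE rmorph_sum; apply: eq_bigr => k _. by rewrite !mxE rmorphM.
have e1 : \sum_k h 0 k * Ar k i = 1 by have := hh i iS; rewrite !mxE.
have -> : \sum_k (Num.floor (K * h 0 k))%:~R * Ar k i
    = K - \sum_k (K * h 0 k - (Num.floor (K * h 0 k))%:~R) * Ar k i.
  have -> : \sum_k (K * h 0 k - (Num.floor (K * h 0 k))%:~R) * Ar k i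
      = K * \sum_k h 0 k * Ar k i - \sum_k (Num.floor (K * h 0 k))%:~R * Ar k i.
    by rewrite mulr_sumr -sumrB; apply: eq_bigr => k _; rewrite mulrBl mulrA.
  by rewrite e1 mulr1 opprB addrC subrK.
have b1 : \sum_k (K * h 0 k - (Num.floor (K * h 0 k))%:~R) * Ar k i
    <= \sum_k \sum_i' `|Ar k i'|.
  apply: ler_sum => k _.
  have f1 := floor_le (K * h 0 k).
  have f2 := lt_succ_floor (K * h 0 k); rewrite intrD in f2.
  apply: (le_trans (y := `|Ar k i|)).
    have n1 := ler_norm (Ar k i); have n2 := ler_norm (- Ar k i); rewrite normrN in n2.
    move: f1 f2 n1 n2; set a := Ar k i; set fl := (Num.floor _)%:~R; set x := K * h 0 k.
    move=> f1 f2 n1 n2; nra.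
  by rewrite (bigD1 i) //= lerDl sumr_ge0 // => *; exact: normr_ge0.
rewrite /K in b1 *; lra.
Qed.

Variable g : 'rV[int]_d.
Hypothesis gpos : forall i, i \in sigma -> 1 <= (g *m A) 0 i.

Lemma G_real : map_mx ir g *m Ar = map_mx ir (g *m A).
Proof. by rewrite /Ar map_mxM. Qed.

Lemma G_off j : j \notin sigma -> 1 <= (g *m A) 0 j.
Proof.
move=> jn.
have [k [sk [k0 ek]]] := col_cone j.
have := za_col (map_mx ir g) j k ek; rewrite G_real !mapE => eG.
have spos : 0 < \sum_i k i 0.
  rewrite lt_def sumr_ge0 // andbT; apply/eqP => e.
  have kz : k = 0.
    apply/matrixP => i i0; rewrite (ord1 i0) mxE.
    by apply: (psumr_eq0P (P := predT) (F := fun i => k i 0)) => // i' _.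
  by have := col_nz j; rewrite ek kz mulmx0 eqxx.
have : \sum_i k i 0 <= ((g *m A) 0 j)%:~R.
  rewrite eG; apply: ler_sum => i _; rewrite mapE.
  case: (boolP (i \in sigma)) => iS; last by rewrite sk // mulr0.
  have := gpos i iS; rewrite -(ler1z R) => gi; have := k0 i; nra.
move=> le; have : (0 : R) < ((g *m A) 0 j)%:~R by apply: lt_le_trans le.
rewrite ltr0z; lia.
Qed.

Lemma G_ge0 j : 0 <= (g *m A) 0 j.
Proof. by case: (boolP (j \in sigma)) => jS; [have := gpos j jS | have := G_off j jS]; lia. Qed.

Definition T := \sum_(i in sigma) (g *m A) 0 i.
Definition B := (absz T).+1.
Definition c : 'rV[int]_n :=
  \row_j (if j \in sigma then 0 else (B ^ n)%:Z * (g *m A) 0 j + (B ^ j)%:Z).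

Lemma c_sig j : j \in sigma -> c 0 j = 0.
Proof. by move=> jS; rewrite mxE jS. Qed.

Lemma c_off j : j \notin sigma -> 1 <= c 0 j.
Proof.
move=> jn; rewrite mxE (negbTE jn).
have := G_off j jn; have : (0 < B ^ j)%N by rewrite expn_gt0.
set X := (B ^ n)%N; set Y := (B ^ j)%N; lia.
Qed.

Definition S (x : 'cV[int]_n) := \sum_(j | j \notin sigma) (g *m A) 0 j * x j 0.
Definition P (x : 'cV[int]_n) := \sum_(j | j \notin sigma) (B ^ j)%:Z * x j 0.

Lemma cost_split x : cost c x = (B ^ n)%:Z * S x + P x.
Proof.
rewrite /cost mxE (bigID (fun j => j \in sigma)) /= big1 ?add0r; last first.
  by move=> j jS; rewrite mxE jS mul0r.
rewrite /S /P mulr_sumr -big_split /=; apply: eq_bigr => j jn.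
by rewrite mxE (negbTE jn) mulrDl mulrA.
Qed.

Lemma Delta_char t : Delta_c R A c t <-> t \subset sigma.
Proof.
split.
  case=> y hy; apply/subsetP => j jt; apply/negPn/negP => jn.
  have e := (hy j).1 jt.
  have : ya A y j <= 0.
    rewrite /ya; apply: nonpos_on_sigma => i iS.
    case: (boolP (i \in t)) => it.
      by have := (hy i).1 it; rewrite /ya /cr c_sig // => ->.
    by have := (hy i).2 it; rewrite /ya /cr c_sig // => /ltW.
  rewrite e /cr; have := c_off j jn; rewrite -(ler1z R); lra.
move=> ts; have [y hy] := row_sol (\row_i (if i \in t then 0 else -1)).
exists y => j; split.
  move=> jt; have jS := subsetP ts j jt.
  by rewrite /ya hy // mxE jt /cr c_sig.
move=> jnt; case: (boolP (j \in sigma)) => jS.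
  by rewrite /ya hy // mxE (negbTE jnt) /cr c_sig // ltrN10.
have : ya A y j <= 0.
  rewrite /ya; apply: nonpos_on_sigma => i iS; rewrite hy // mxE.
  by case: ifP => _; [ | rewrite lerN10].
rewrite /cr; have := c_off j jS; rewrite -(ler1z R); lra.
Qed.

Lemma tri : is_triangulation R A (Delta_c R A c).
Proof.
split.
- move=> s t /Delta_char ss ts; apply/Delta_char; exact: subset_trans ts ss.
- move=> s /Delta_char ss x xs e; case: hsig => hi _; apply: hi => // j jn.
  by apply: xs; apply: contra jn; apply: (subsetP ss).
- move=> v; split.
    move=> vc; exists sigma; split; first by apply/Delta_char; exact: subxx.
    by case: hsig => _ h; apply/h.
  by case=> s [_ [x [x0 [_ ->]]]]; exists x.
- move=> s t /Delta_char ss /Delta_char ts v; split.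
    case=> [[x [x0 [xs ex]]] [x' [x0' [xt ex']]]].
    have xx : x = x'.
      apply: coords_uniq; last by rewrite -ex -ex'.
        by move=> j jn; apply: xs; apply: contra jn; apply: (subsetP ss).
      by move=> j jn; apply: xt; apply: contra jn; apply: (subsetP ts).
    exists x; split => //; split => // j; rewrite in_setI negb_and => /orP [] jn.
      exact: xs.
    by rewrite xx; exact: xt.
  case=> x [x0 [xst ex]]; split; exists x; split=> //; split=> // j jn;
  by apply: xst; rewrite in_setI negb_and jn ?orbT.
Qed.

Section BSec.
Variables (b : 'cV[int]_d) (mu : 'cV[R]_n).
Hypotheses (smu : suppS mu) (mu0 : forall j, 0 <= mu j 0) (emu : map_mx ir b = Ar *m mu).

Definition f : 'cV[int]_n := map_mx (@Num.floor R) mu.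

Lemma fE j : f j 0 = Num.floor (mu j 0). Proof. by rewrite mxE. Qed.

Lemma f_ge0 j : 0 <= f j 0.
Proof. rewrite fE floor_ge_int; exact: mu0. Qed.

Lemma feas_bound x : A *m x = b -> (forall j, j \notin sigma -> 0 <= x j 0) ->
  forall i, i \in sigma -> x i 0 <= f i 0.
Proof.
move=> ex xpos i iS.
pose w : 'cV[int]_n := \col_j (if j \in sigma then 0 else x j 0).
have wc : in_cone A (Ar *m map_mx ir w).
  exists (map_mx ir w); split => // j; rewrite mapE ler0z mxE.
  by case: ifP => jS //; apply: xpos; rewrite jS.
have [nu [snu [nu0 enu]]] := coordsP _ wc.
have nue : nu = mu - map_mx ir (x - w).
  apply: coords_uniq => //.
    by move=> j jn; rewrite !mxE (negbTE jn) smu // subrr add0r mulr0z oppr0.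
  by rewrite -enu mulmxBr -emu ArM ArM mulmxBr ex map_mxB opprB addrC subrK.
have := nu0 i; rewrite nue !mxE iS subr0 subr_ge0 => h.
by rewrite floor_ge_int.
Qed.

Lemma S_eq x : A *m x = b -> S x = (g *m b) 0 0 - \sum_(j in sigma) (g *m A) 0 j * x j 0.
Proof.
by move=> ex; rewrite -ex mulmxA mxE (bigID (fun j => j \in sigma)) /= /S addrC addrK.
Qed.

Definition Sstar := (g *m b) 0 0 - \sum_(j in sigma) (g *m A) 0 j * f j 0.

Lemma S_ge x : A *m x = b -> (forall j, j \notin sigma -> 0 <= x j 0) ->
  Sstar <= S x /\ (S x = Sstar -> forall i, i \in sigma -> x i 0 = f i 0).
Proof.
move=> ex xpos; have hb := feas_bound x ex xpos.
have diff : S x - Sstar = \sum_(j in sigma) (g *m A) 0 j * (f j 0 - x j 0).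
  rewrite S_eq // /Sstar.
  rewrite [RHS](eq_bigr (fun j => (g *m A) 0 j * f j 0 - (g *m A) 0 j * x j 0)); last first.
    by move=> j _; rewrite mulrBr.
  rewrite sumrB; ring.
have terms : forall j, j \in sigma -> 0 <= (g *m A) 0 j * (f j 0 - x j 0).
  by move=> j jS; apply: mulr_ge0; [exact: G_ge0 | rewrite subr_ge0; exact: hb].
split; first by rewrite -subr_ge0 diff; exact: sumr_ge0.
move=> e i iS.
have : S x - Sstar = 0 by rewrite e subrr.
rewrite diff => /(psumr_eq0P terms) /(_ i iS) /eqP; rewrite mulf_eq0 => /orP [].
  by have := gpos i iS => h /eqP e0; rewrite e0 in h.
by rewrite subr_eq0 => /eqP.
Qed.

Definition Opt u := IP_feasible A b u /\ forall i, i \in sigma -> u i 0 = f i 0.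

Lemma opt_exists : exists u, Opt u.
Proof.
pose r := b - A *m f.
have rc : in_cone A (map_mx ir r).
  exists (mu - map_mx ir f); split.
    by move=> j; rewrite !mxE subr_ge0 floor_le.
  by rewrite mulmxBr -emu ArM /r map_mxB.
have [u0 [u00 eu0]] := hnormal _ rc.
have fu : IP_feasible A b (u0 + f).
  split; first by move=> j; rewrite mxE addr_ge0 // f_ge0.
  by rewrite mulmxDr -eu0 /r subrK.
exists (u0 + f); split => // i iS.
have := feas_bound (u0 + f) fu.2 (fun j _ => fu.1 j) i iS.
rewrite mxE => h; apply: le_anti; apply/andP; split => //; rewrite -[X in X <= _]add0r; apply: lerD => //; exact: u00.
Qed.

Lemma Sstar_le : Sstar <= T.
Proof.
rewrite -(ler_int R).
have e : (Sstar%:~R : R) = \sum_(j in sigma) ((g *m A) 0 j)%:~R * (mu j 0 - (f j 0)%:~R).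
  rewrite /Sstar intrB (big_morph (fun z : int => z%:~R : R) (@intrD R) (mulr0z 1)).
  have -> : ((g *m b) 0 0)%:~R = \sum_(j in sigma) ((g *m A) 0 j)%:~R * mu j 0 :> R.
    have : map_mx ir (g *m b) = map_mx ir (g *m A) *m mu by rewrite map_mxM emu mulmxA G_real.
    move/(congr1 (fun M : 'M[R]_1 => M 0 0)); rewrite mapE => ->.
    rewrite mxE (bigID (fun j => j \in sigma)) /= [X in _ + X]big1 ?addr0.
      by apply: eq_bigr => j _; rewrite mapE.
    by move=> j jn; rewrite smu // mulr0.
  by rewrite -sumrB; apply: eq_bigr => j _; rewrite intrM mulrBr.
rewrite e /T (big_morph (fun z : int => z%:~R : R) (@intrD R) (mulr0z 1)); apply: ler_sum => j jS.
have g0 := G_ge0 j; rewrite -(ler0z R) in g0.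
have f1 := floor_le (mu j 0); have f2 := lt_succ_floor (mu j 0); rewrite intrD in f2.
rewrite fE; move: g0 f1 f2; set G := ((g *m A) 0 j)%:~R; set fl := (Num.floor _)%:~R.
move=> g0 f1 f2; nra.
Qed.

Lemma opt_S u : Opt u -> S u = Sstar.
Proof.
case=> [[u0 eu] uf]; rewrite S_eq // /Sstar; congr (_ - _).
by apply: eq_bigr => i iS; rewrite uf.
Qed.

Lemma opt_bound (u : 'cV[int]_n) : Opt u -> forall j, j \notin sigma -> u j 0 <= T.
Proof.
move=> ou j jn; have SuE := opt_S u ou; case: ou => [[u0 eu] uf].
have : u j 0 <= S u.
  rewrite /S (bigD1 j) //=.
  have rest : 0 <= \sum_(i | (i \notin sigma) && (i != j)) (g *m A) 0 i * u i 0.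
    by apply: sumr_ge0 => i _; apply: mulr_ge0; [exact: G_ge0 | exact: u0].
  have := G_off j jn; have := u0 j; move: rest.
  set s := \sum_(i | _) _; set G := (g *m A) 0 j; set a := u j 0; nia.
have := Sstar_le; rewrite SuE => h1 h2; exact: le_trans h2 h1.
Qed.

Definition dg (u : 'cV[int]_n) (j : 'I_n) : nat := if j \in sigma then 0%N else absz (u j 0).

Lemma P_nat (u : 'cV[int]_n) : (forall j, 0 <= u j 0) -> P u = (\sum_j dg u j * B ^ j)%N%:Z.
Proof.
move=> u0; rewrite (big_morph Posz PoszD (erefl (Posz 0))) /P big_mkcond /=.
apply: eq_bigr => j _; rewrite /dg; case: (boolP (j \in sigma)) => jS /=.
  by rewrite mul0n.
by rewrite PoszM mulrC; congr (_ * _); have := u0 j; lia.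
Qed.

Lemma opt_ge0 (u : 'cV[int]_n) : Opt u -> forall j, 0 <= u j 0.
Proof. by case=> [[]]. Qed.

Lemma P_lt u : Opt u -> P u < (B ^ n)%:Z.
Proof.
move=> ou; rewrite (P_nat u (opt_ge0 u ou)) ltz_nat.
apply: digits_lt => j; rewrite /dg; case: ifP => jS //.
have := opt_bound u ou j (negbT jS); have := opt_ge0 u ou j; rewrite /B; lia.
Qed.

Lemma P_inj u v : Opt u -> Opt v -> P u = P v -> u = v.
Proof.
move=> ou ov; rewrite (P_nat u (opt_ge0 u ou)) (P_nat v (opt_ge0 v ov)).
case=> /digits_inj hd.
have hd' : forall j, dg u j = dg v j.
  apply: hd => j; rewrite /dg; case: ifP => jS //.
    have := opt_bound u ou j (negbT jS); have := opt_ge0 u ou j; rewrite /B; lia.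
  have := opt_bound v ov j (negbT jS); have := opt_ge0 v ov j; rewrite /B; lia.
apply/matrixP => j k; rewrite (ord1 k).
case: (boolP (j \in sigma)) => jS; first by rewrite ou.2 // ov.2.
have := hd' j; rewrite /dg (negbTE jS); have := opt_ge0 u ou j; have := opt_ge0 v ov j; lia.
Qed.

Lemma ustar_exists : exists us, Opt us /\ forall v, Opt v -> P us <= P v.
Proof.
have [k [[us [ous ek]] hmin]] := min_ex (fun k => exists u, Opt u /\ P u = k%:Z)
  (let: ex_intro u ou := opt_exists in ex_intro _ _ (ex_intro _ u (conj ou (P_nat _ (opt_ge0 _ ou))))).
exists us; split => // v ov; rewrite ek.
have := hmin _ (ex_intro _ v (conj ov (P_nat _ (opt_ge0 _ ov)))).
by rewrite -lez_nat -(P_nat v (opt_ge0 v ov)).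
Qed.

Lemma main_inner : exists us, IP_feasible A b us /\
  forall x, G_feasible A sigma b x -> cost c us <= cost c x /\ (cost c x = cost c us -> x = us).
Proof.
have [us [ous hmin]] := ustar_exists.
exists us; split; first exact: ous.1.
move=> x [ex xpos].
have [sge seq] := S_ge x ex xpos.
have SuE := opt_S us ous.
have Pus := P_lt us ous.
have Pus0 : 0 <= P us by rewrite (P_nat us (opt_ge0 us ous)).
have Px0 : 0 <= P x by apply: sumr_ge0 => j jn; apply: mulr_ge0 => //; exact: xpos.
rewrite !cost_split SuE.
have M0 : 0 < (B ^ n)%:Z by rewrite ltz_nat expn_gt0.
case: (boolP (S x == Sstar)) => [/eqP eqS | neS].
  have ox : Opt x.
    split => //; last exact: seq.
    split => // j; case: (boolP (j \in sigma)) => jS; last exact: xpos.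
    by rewrite seq // f_ge0.
  have le := hmin x ox.
  rewrite eqS; split; first by rewrite lerD2l.
  by move/addrI => e; apply: P_inj => //.
have lt : Sstar < S x by rewrite lt_neqAle eq_sym neS sge.
move: lt Pus Pus0 Px0 M0; set M := (B ^ n)%:Z; set a := S x; set s := Sstar.
set p := P us; set q := P x => lt h1 h2 h3 h4.
split; first by nia.
move=> e; exfalso; nia.
Qed.

End BSec.
End Main.

Arguments c {d n} A sigma g.
Arguments c_sig {d n A sigma g j}.
Arguments g_exists {R d n A sigma}.
Arguments tri {R d n A sigma} hsig hker {g}.
Arguments Delta_char {R d n A sigma} hsig hker {g} gpos t.
Arguments main_inner {R d n A sigma} hsig hker hnormal {g} gpos {b mu}.
Arguments coordsP {R d n A sigma} hsig {v}.

Lemma Gobj_cost (R : realType) d n (A : 'M[int]_(d, n)) sigma (g : 'rV[int]_d) (x : 'cV[int]_n) :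
  G_obj A (c A sigma g) (0 : 'rV[R]_d) sigma x = (cost (c A sigma g) x)%:~R.
Proof.
rewrite /G_obj /cost mxE (big_morph (fun z : int => z%:~R : R) (@intrD R) (mulr0z 1)).
rewrite [RHS](bigID (fun j => j \in sigma)) /= [X in _ = X + _]big1 ?add0r.
  by apply: eq_bigr => j jn; rewrite /ya mul0mx mxE subr0 /cr intrM.
by move=> j jS; rewrite c_sig // mul0r.
Qed.

Theorem corollary4p8 (R : realType) (d n : nat) (A : 'M[int]_(d, n))
  (hrank : \rank (Ar R A) = d)
  (hpointed : cone_pointed R A)
  (hker : kernel_condition R A)
  (hZ : lattice_spanning A)
  (hnormal : normal R A)
  (hsimp : simplicial R A)
  (sigma : {set 'I_n}) (hsigma : coarsest_face R A sigma) :
  exists c : 'rV[int]_n,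
    generic R A c /\
    (forall t : {set 'I_n}, Delta_c R A c t <-> t \subset sigma) /\
    gomory_family R A c.
Proof.
have [g gpos] := g_exists hsigma.
have main : forall b, in_NA A b -> exists us, IP_feasible A b us /\
    forall x, G_feasible A sigma b x ->
      cost (c A sigma g) us <= cost (c A sigma g) x /\
      (cost (c A sigma g) x = cost (c A sigma g) us -> x = us).
  move=> b [u [u0 ->]].
  have bc : in_cone A (map_mx (fun z : int => z%:~R : R) (A *m u)).
    exists (map_mx (fun z : int => z%:~R : R) u); split.
      by move=> j; rewrite mapE ler0z.
    by rewrite ArM.
  have [mu [smu [mu0 emu]]] := coordsP hsigma bc.
  exact: (main_inner hsigma hker hnormal gpos smu mu0 emu).
exists (c A sigma g); split; [split|split].
- exact: (tri hsigma hker gpos).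
- move=> b hb; have [us [fus H]] := main b hb.
  have Gf v : IP_feasible A b v -> G_feasible A sigma b v.
    by case=> v0 ev; split => // j _; exact: v0.
  exists us; split.
    by split => // v fv; exact: (H v (Gf v fv)).1.
  move=> v [fv vopt].
  apply: (H v (Gf v fv)).2; apply/eqP; rewrite eq_le (vopt us fus) /=.
  exact: (H v (Gf v fv)).1.
- exact: (Delta_char hsigma hker gpos).
- move=> b hb; exists sigma; split.
    split; first by apply/(Delta_char hsigma hker gpos); exact: subxx.
    move=> t /(Delta_char hsigma hker gpos) ts st; by apply/eqP; rewrite eqEsubset ts st.
  have [us [fus H]] := main b hb.
  exists (0 : 'rV[R]_d); split.
    by move=> j jS; rewrite /ya mul0mx mxE /cr c_sig.
  exists us; split.
    by split; [exact: fus.2 | move=> j _; exact: fus.1].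
  split; last exact: fus.1.
  move=> x' fx'; rewrite !Gobj_cost ler_int; exact: (H x' fx').1.
Qed.
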